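(* Let $k<m\le kn$ be positive integers and $I$ a single-category instance with $n$ agents, $m$ goods and cardinality constraint $k$. Let $\mathcal{A}^*=(A^*_1,\dots,A^*_n)$ be a utilitarian-optimal allocation and $R=\{i:|A^*_i|<k\}$, $T=\{i:|A^*_i|=k\}$. If $\sum_{i\in R\cup T}u_i(A^*_i)<1$, then $$\frac{\text{OPT-USW}(I)}{\max_{\mathcal{A}\in \mathcal{C}_k(I)}\text{USW}(\mathcal{A})}\le \frac{1+s}{1+\frac{ks^2}{m-1}},\qquad s=-1+\sqrt{1+\frac{m-1}{k}}.$$
   Context: Each agent $i$ has an additive utility function $u_i:2^M\to\mathbb{R}_{\ge 0}$ with $u_i(\emptyset)=0$ and $u_i(M)=1$. An allocation is a partition $(A_1,\dots,A_n)$ of $M$; it is cardinal if $|A_i|\le k$ for all $i$, and $\mathcal{C}_k(I)$ denotes the set of cardinal allocations. $\text{USW}(\mathcal{A})=\sum_i u_i(A_i)$; $\text{OPT-USW}(I)$ is the maximum of $\text{USW}$ over all allocations, attained by a utilitarian-optimal allocation. *)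

(* Defs.v *)
From mathcomp Require Import all_boot all_order all_algebra.
Set Implicit Arguments. Unset Strict Implicit. Unset Printing Implicit Defensive.
Import Order.TTheory GRing.Theory Num.Theory.
Local Open Scope ring_scope.

(* Agents are 'I_n, goods are 'I_m.  An allocation (a partition of M into
   n bundles A_1..A_n) is a map assigning each good to an agent:
   A_i = [set g | a g == i]. *)
Definition alloc (n m : nat) := {ffun 'I_m -> 'I_n}.

Definition bundle n m (a : alloc n m) (i : 'I_n) : {set 'I_m} :=
  [set g | a g == i].

Definition util (R : numDomainType) n m (u : 'I_n -> 'I_m -> R)
  (i : 'I_n) (S : {set 'I_m}) : R := \sum_(g in S) u i g.

Definition USW (R : numDomainType) n m (u : 'I_n -> 'I_m -> R) (a : alloc n m) : R :=
  \sum_(i : 'I_n) util u i (bundle a i).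

Definition cardinal n m (k : nat) (a : alloc n m) : bool :=
  [forall i : 'I_n, #|bundle a i| <= k]%N.

(* utilities are nonnegative; the max over (finitely many) allocations is
   taken with neutral element 0, which is harmless since USW >= 0 *)
Definition OPT_USW (R : realDomainType) n m (u : 'I_n -> 'I_m -> R) : R :=
  \big[Num.max/0]_(a : alloc n m) USW u a.

Definition max_cardinal_USW (R : realDomainType) n m k (u : 'I_n -> 'I_m -> R) : R :=
  \big[Num.max/0]_(a : alloc n m | cardinal k a) USW u a.

(* Main.v *)
Require Import Defs.
From mathcomp Require Import all_boot all_order all_algebra.
From mathcomp Require Import ring lra zify.
Import Order.TTheory GRing.Theory Num.Theory.
Set Implicit Arguments. Unset Strict Implicit. Unset Printing Implicit Defensive.
Local Open Scope ring_scope.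

Lemma sum_by_goods (R : numDomainType) n m (u : 'I_n -> 'I_m -> R)
  (a : alloc n m) (Q : pred 'I_n) :
  \sum_(i | Q i) util u i (bundle a i) = \sum_(g | Q (a g)) u (a g) g.
Proof.
rewrite (partition_big a Q) //=; apply: eq_bigr => i Qi.
rewrite /util /bundle; apply: eq_big => g; first by rewrite inE; case: eqP => [->|]; rewrite ?Qi ?andbF.
by rewrite inE => /eqP ->.
Qed.

Lemma USW_goods (R : numDomainType) n m (u : 'I_n -> 'I_m -> R) (a : alloc n m) :
  USW u a = \sum_g u (a g) g.
Proof. by rewrite /USW (@sum_by_goods _ _ _ u a predT). Qed.

Lemma le_opt (R : realDomainType) n m (u : 'I_n -> 'I_m -> R) (a : alloc n m) :
  USW u a <= OPT_USW u.
Proof. exact: (le_bigmax _ (fun a => USW u a) a). Qed.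

Lemma le_card (R : realDomainType) n m k (u : 'I_n -> 'I_m -> R) (a : alloc n m) :
  cardinal k a -> USW u a <= max_cardinal_USW k u.
Proof. move=> ca; exact: (le_bigmax_cond _ (fun a => USW u a) ca). Qed.

Lemma topk (R : realDomainType) m (d : 'I_m -> R) (d0 : forall g, 0 <= d g) k :
  forall A : {set 'I_m}, (k <= #|A|)%N ->
  exists W : {set 'I_m}, [&& W \subset A, #|W| == k &
     k%:R * \sum_(g in A) d g <= #|A|%:R * \sum_(g in W) d g].
Proof.
move=> A; move eN : (#|A| - k)%N => N; elim: N A eN => [|N IH] A eN kA.
  have eA : #|A| = k by lia.
  by exists A; rewrite subxx eA eqxx /=.
have /set0Pn [x xA] : A != set0 by rewrite -card_gt0; lia.
case: (arg_minP d xA) => g0 g0A g0min.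
have g0A' : g0 \in A by exact: g0A.
have cA' : #|A :\ g0| = (#|A|).-1.
  by rewrite [in RHS](cardsD1 g0 A) g0A'.
have [W /and3P [WA /eqP cW ineq]] := IH (A :\ g0) ltac:(lia) ltac:(lia).
exists W; apply/and3P; split; first by apply: (subset_trans WA); apply: subD1set.
  by rewrite cW.
have sWg : k%:R * d g0 <= \sum_(g in W) d g.
  rewrite -cW mulr_natl -sumr_const; apply: ler_sum => g gW.
  by have := subsetP WA g gW; rewrite !inE => /andP [_ ?]; exact: g0min.
have sA'g : (#|A|.-1)%:R * d g0 <= \sum_(g in A :\ g0) d g.
  rewrite -cA' mulr_natl -sumr_const; apply: ler_sum => g.
  by rewrite inE => /andP [_ gA]; apply: g0min.
rewrite (bigD1 g0 g0A') /=.
have -> : \sum_(i in A | i != g0) d i = \sum_(g in A :\ g0) d g.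
  by apply: eq_bigl => g; rewrite !inE andbC.
have ea : (#|A|)%:R = (#|A|.-1)%:R + 1 :> R.
  rewrite natr1 prednK //; lia.
rewrite cA' in ineq.
have kk : (k%:R : R) <= (#|A|.-1)%:R by rewrite ler_nat; lia.
have k0 : (0 : R) <= k%:R by [].
have sW0 : 0 <= \sum_(g in W) d g by apply: sumr_ge0.
rewrite ea; nra.
Qed.

Lemma sum_part (V : nmodType) n m (a : alloc n m) (Q : pred 'I_n) (F : 'I_m -> V) :
  \sum_(i | Q i) \sum_(g in bundle a i) F g = \sum_(g | Q (a g)) F g.
Proof.
rewrite (partition_big a Q) //=; apply: eq_bigr => i Qi.
rewrite /bundle; apply: eq_bigl => g.
by rewrite inE; case: eqP => [->|]; rewrite ?Qi ?andbF.
Qed.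

Lemma card_part n m (a : alloc n m) (Q : pred 'I_n) :
  (\sum_(i | Q i) #|bundle a i| = \sum_(g | Q (a g)) 1)%N.
Proof.
rewrite (partition_big a Q) //=; apply: eq_bigr => i Qi.
rewrite -sum1_card /bundle; apply: eq_bigl => g.
by rewrite inE; case: eqP => [->|]; rewrite ?Qi ?andbF.
Qed.

Lemma sum_shift (V : nmodType) S (hS : (0 < S)%N) c (G : nat -> V) :
  \sum_(s < S) G ((c + s) %% S)%N = \sum_(q < S) G q.
Proof.
have inj : injective (fun s : 'I_S => Ordinal (ltn_pmod (c + s) hS)).
  move=> x y /(congr1 val) /= /eqP; rewrite eqn_modDl !modn_small // => /eqP.
  exact: val_inj.
by rewrite [RHS](reindex_inj inj).
Qed.

Lemma size_bigcat (I : finType) (T : Type) (P : pred I) (f : I -> seq T) :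
  size (\big[cat/[::]]_(i | P i) f i) = (\sum_(i | P i) size (f i))%N.
Proof. by elim/big_rec2: _ => // i x y _ <-; rewrite size_cat. Qed.

Lemma count_bigcat (I : finType) (T : Type) (a : pred T) (P : pred I) (f : I -> seq T) :
  count a (\big[cat/[::]]_(i | P i) f i) = (\sum_(i | P i) count a (f i))%N.
Proof. by elim/big_rec2: _ => // i x y _ <-; rewrite count_cat. Qed.

Lemma ar1 (R : realFieldType) (a b x : R) : a <= x -> a + b = 1 -> 1 - x <= b.
Proof. move=> *; lra. Qed.

Lemma count_card (T : eqType) (x0 : T) (s : seq T) (x : T) :
  count_mem x s = #|[set q : 'I_(size s) | nth x0 s q == x]|.
Proof.
rewrite -sum1_count (big_nth x0) big_mkord -sum1_card.
by apply: eq_bigl => q; rewrite inE.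
Qed.

Lemma pt_ineq (R : realFieldType) (k b a K D : R) :
  0 < k -> 0 < b -> 0 < a -> 0 <= D -> k * D <= a * K ->
  4 * b * k * D - a * D <= 4 * b ^+ 2 * k * K.
Proof.
move=> k0 b0 a0 D0 h.
have h1 : a * (4 * b ^+ 2 * k * K) >= 4 * b ^+ 2 * k * (k * D).
  have hh : 0 <= 4 * b ^+ 2 * k by rewrite expr2; nra.
  have := ler_wpM2l hh h; move=> h2.
  by apply: le_trans h2 _; rewrite le_eqVlt; apply/orP; left; apply/eqP; ring.
have h3 : 0 <= D * (2 * b * k - a) ^+ 2 by apply: mulr_ge0 => //; apply: sqr_ge0.
have h4 : a * (4 * b * k * D - a * D) <= a * (4 * b ^+ 2 * k * K).
  apply: le_trans h1; rewrite -subr_ge0.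
  have -> : 4 * b ^+ 2 * k * (k * D) - a * (4 * b * k * D - a * D) = D * (2 * b * k - a) ^+ 2 by ring.
  done.
by rewrite -(ler_pM2l a0).
Qed.

Lemma final_ineq (R : realFieldType) n (P : pred 'I_n) (N D K ar : 'I_n -> R)
  (X LB OPT k M b : R) :
  0 < k -> 1 <= b -> 4 * b * (b - 1) * k = M - 1 ->
  LB = X + \sum_(i | P i) (N i + K i) ->
  OPT = X + \sum_(i | P i) (N i + D i) ->
  1 <= X + \sum_(i | P i) N i ->
  (forall i, P i -> k * D i <= ar i * K i) ->
  (forall i, P i -> 0 <= D i) ->
  (forall i, P i -> 0 <= N i) ->
  (forall i, P i -> N i + D i <= 1) ->
  (forall i, P i -> 1 <= ar i) ->
  \sum_(i | P i) ar i + X <= M ->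
  OPT <= b * LB.
Proof.
move=> k0 b1 hb eLB eOPT hZ hK hD hN hND har hM.
have b0 : 0 < b by apply: (lt_le_trans ltr01 b1).
have s1 : \sum_(i | P i) (4 * b * k * D i - ar i * D i) <= \sum_(i | P i) (4 * b ^+ 2 * k * K i).
  apply: ler_sum => i Pi; apply: pt_ineq => //; first by apply: (lt_le_trans ltr01 (har i Pi)).
  exact: hD. exact: hK.
have s2 : \sum_(i | P i) (ar i * D i) <= \sum_(i | P i) (ar i - N i).
  apply: ler_sum => i Pi.
  have := hND i Pi; have := har i Pi; have := hN i Pi; have := hD i Pi.
  move=> d0 n0 a1 nd1; nra.
rewrite big_split /= sumrN -!mulr_sumr in s1.
rewrite big_split /= sumrN in s2.
rewrite big_split /= in eLB. rewrite big_split /= in eOPT.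
move: s1 s2 eLB eOPT hZ hM.
set SD := \sum_(i | P i) D i.
set SK := \sum_(i | P i) K i.
set SN := \sum_(i | P i) N i.
set SA := \sum_(i | P i) ar i.
set SAD := \sum_(i | P i) ar i * D i.
move=> s1 s2 -> -> hZ hM.
have hbk : 0 < 4 * b * k by rewrite mulr_gt0 // mulr_gt0.
rewrite -(ler_pM2l hbk) -subr_ge0.
have e : 4 * b * k * (b * (X + (SN + SK))) - 4 * b * k * (X + (SN + SD))
  = (4 * b * (b - 1) * k) * (X + SN) + (4 * b ^+ 2 * k * SK - 4 * b * k * SD) by ring.
rewrite e hb.
have : 4 * b * k * SD - SAD <= 4 * b ^+ 2 * k * SK.
  by move: s1; rewrite !mulrA.
move=> s1'.
have hM1 : 0 <= M - 1.
  rewrite -hb; have hb1 : 0 <= b - 1 by rewrite subr_ge0.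
  have : 0 <= 4 * b * (b - 1) by nra.
  move=> hh; nra.
nra.
Qed.

Lemma bt_facts (R : rcfType) (m k : nat) : (0 < k)%N -> (1 < m)%N ->
  let B : R := Num.sqrt (1 + (m%:R - 1) / k%:R) in
  [/\ 1 <= (1 + B) / 2,
      4 * ((1 + B) / 2) * ((1 + B) / 2 - 1) * k%:R = m%:R - 1 &
      (1 + (-1 + B)) / (1 + k%:R * (-1 + B) ^+ 2 / (m%:R - 1)) = (1 + B) / 2].
Proof.
move=> hk hm B.
have k0 : (0 : R) < k%:R by rewrite ltr0n.
have M1 : (0 : R) < m%:R - 1 by rewrite subr_gt0 ltr1n.
have r0 : (0 : R) < (m%:R - 1) / k%:R by rewrite divr_gt0.
have hB2 : B ^+ 2 = 1 + (m%:R - 1) / k%:R by rewrite sqr_sqrtr // addr_ge0 // ltW.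
have B0 : 0 <= B by rewrite sqrtr_ge0.
have B1 : 1 < B.
  have : 1 < B ^+ 2 by rewrite hB2 ltrDl.
  rewrite expr2 => h; nra.
split.
- lra.
- have e : 4 * ((1 + B) / 2) * ((1 + B) / 2 - 1) = B ^+ 2 - 1 by field.
  rewrite e hB2 (addrC 1) addrK divfK //; exact: lt0r_neq0.
- have eM1 : m%:R - 1 = k%:R * (B ^+ 2 - 1).
    by rewrite hB2 (addrC 1) addrK mulrC divfK //; exact: lt0r_neq0.
  rewrite eM1; field.
  have h1 : 0 < B ^+ 2 - 1 by rewrite expr2; nra.
  have h2 : 0 < B ^+ 2 - 1 + (-1 + B) ^+ 2 by rewrite !expr2; nra.
  by rewrite !gt_eqF.
Qed.

Lemma conclude (R : realFieldType) (OPT C bt e : R) :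
  1 <= OPT -> 1 <= bt -> OPT <= bt * C -> e = bt -> OPT / C <= e.
Proof.
move=> h1 h2 h3 ->.
have C0 : 0 < C.
  have : 0 < bt * C by lra.
  by rewrite pmulr_rgt0 //; lra.
by rewrite ler_pdivrMr.
Qed.

Theorem lemma5 (R : rcfType) (n m k : nat)
  (u : 'I_n -> 'I_m -> R)
  (u_ge0 : forall i g, 0 <= u i g)
  (u_norm : forall i, util u i [set: 'I_m] = 1)
  (hk : (0 < k)%N) (hn : (0 < n)%N)
  (hkm : (k < m)%N) (hmkn : (m <= k * n)%N)
  (Astar : alloc n m)
  (Aopt : USW u Astar = OPT_USW u)
  (hRT : \sum_(i : 'I_n | (#|bundle Astar i| <= k)%N) util u i (bundle Astar i) < 1) :
  let s := -1 + Num.sqrt (1 + (m%:R - 1) / k%:R) in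
  OPT_USW u / max_cardinal_USW k u
    <= (1 + s) / (1 + k%:R * s ^+ 2 / (m%:R - 1)).
Proof.
cbv zeta.
set A := Astar in Aopt hRT *.
set OPT := OPT_USW u in Aopt *.
set C := max_cardinal_USW k u.
pose w g := u (A g) g.
have hw : forall i g, u i g <= w g.
  move=> i g.
  pose a' : alloc n m := [ffun g' => if g' == g then i else A g'].
  have := le_opt u a'; rewrite -/OPT -Aopt !USW_goods (bigD1 g) //= [in X in _ <= X](bigD1 g) //=.
  rewrite /a' ffunE eqxx.
  rewrite (eq_bigr (fun g' => u (A g') g')); first by rewrite lerD2r.
  by move=> g' /negbTE ne; rewrite ffunE ne.
have hle1 : forall i g, u i g <= 1.
  move=> i g; have := u_norm i; rewrite /util (bigD1 g) ?in_setT //= => <-.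
  by rewrite lerDl; apply: sumr_ge0 => *.
have w0 : forall g, 0 <= w g by move=> g; apply: u_ge0.
have w1 : forall g, w g <= 1 by move=> g; apply: hle1.
pose notH i := (#|bundle A i| <= k)%N.
pose X := \sum_(g | notH (A g)) w g.
have hX : X < 1 by rewrite /X -(@sum_by_goods _ _ _ u A notH).
have hOPT : OPT = \sum_g w g by rewrite -Aopt USW_goods.
have OPT1 : 1 <= OPT.
  pose a0 : alloc n m := [ffun _ => Ordinal hn].
  have := le_opt u a0; rewrite -/OPT USW_goods.
  suff -> : \sum_g u (a0 g) g = 1 by [].
  rewrite -(u_norm (Ordinal hn)) /util; apply: eq_big => g; first by rewrite in_setT.
  by rewrite ffunE.
have [h0 Hh0] : exists h0, ~~ notH h0.
  case: (pickP (fun i => ~~ notH i)) => [h0 Hh0|none]; first by exists h0.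
  suff : OPT <= X by move=> ?; lra.
  rewrite hOPT /X le_eqVlt; apply/orP; left; apply/eqP; apply: eq_bigl => g.
  by rewrite (negbFE (none (A g))).
pose a i := #|bundle A i|.
have suma : (\sum_i a i = m)%N.
  by rewrite /a (card_part A predT) /= sum1_card card_ord.
pose E := \big[cat/[::]]_(j | notH j) nseq (k - a j)%N j.
pose S := size E.
have hSsum : S = (\sum_(j < n | notH j) (k - a j))%N.
  by rewrite /S /E size_bigcat; apply: eq_bigr => j _; rewrite size_nseq.
have hcount : forall i, count_mem i E = if notH i then (k - a i)%N else 0%N.
  move=> i; rewrite /E count_bigcat.
  under eq_bigr do rewrite count_nseq.
  case: ifP => Hi.
    rewrite (bigD1 i) //= /pred1 /= eqxx mul1n big1 ?addn0 // => j /andP [_ /negbTE ->].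
    by rewrite mul0n.
  rewrite big1 // => j Hj; case: (boolP (j == i)) => [/eqP ej|nij]; first by move: Hj; rewrite ej Hi.
  by have -> : pred1 i j = false by exact: negbTE.
have inE_H : forall q, (q < S)%N -> notH (nth h0 E q).
  move=> q qS; have : (0 < count_mem (nth h0 E q) E)%N.
    by rewrite -has_count has_pred1 mem_nth.
  by rewrite hcount; case: ifP.
have hcap : (\sum_(i < n | ~~ notH i) (a i - k) <= S)%N.
  have e1 : (\sum_(i < n | ~~ notH i) (a i - k) + \sum_(i < n | ~~ notH i) k
             = \sum_(i < n | ~~ notH i) a i)%N.
    rewrite -big_split; apply: eq_bigr => i Hi.
    by move: Hi; rewrite /notH -ltnNge /a => /ltnW ?; apply: subnK.
  have e2 : (\sum_(i < n | notH i) (k - a i) + \sum_(i < n | notH i) a i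
             = \sum_(i < n | notH i) k)%N.
    by rewrite -big_split; apply: eq_bigr => i; rewrite /notH /a => ?; apply: subnK.
  have e3 : (\sum_(i < n) k = k * n)%N by rewrite sum_nat_const card_ord mulnC.
  rewrite (bigID notH) /= addnC in suma.
  rewrite (bigID notH) /= addnC in e3.
  rewrite hSsum. move: e1 e2 suma e3.
  set x1 := (\sum_(i < n | ~~ notH i) (a i - k))%N.
  set x2 := (\sum_(i < n | ~~ notH i) k)%N.
  set x3 := (\sum_(i < n | ~~ notH i) a i)%N.
  set y1 := (\sum_(i < n | notH i) (k - a i))%N.
  set y2 := (\sum_(i < n | notH i) a i)%N.
  set y3 := (\sum_(i < n | notH i) k)%N.
  lia.
have hS0 : (0 < S)%N.
  apply: leq_trans hcap; rewrite (bigD1 h0) //=.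
  move: Hh0; rewrite /notH -ltnNge /a => ?; lia.
pose nu g := (\sum_(q < S) u (nth h0 E q) g) / S%:R.
have S0R : (0 : R) < S%:R by rewrite ltr0n.
have nu0 : forall g, 0 <= nu g.
  by move=> g; rewrite /nu divr_ge0 // sumr_ge0.
have nuw : forall g, nu g <= w g.
  move=> g; rewrite /nu ler_pdivrMr //.
  have : \sum_(q < S) u (nth h0 E q) g <= \sum_(q < S) w g by apply: ler_sum.
  by rewrite sumr_const card_ord mulr_natr.
have ujP : forall j, 1 - X <= \sum_(g | ~~ notH (A g)) u j g.
  move=> j; have := u_norm j; rewrite /util (bigID (fun g => notH (A g))) /=.
  have : \sum_(g in [set: 'I_m] | notH (A g)) u j g <= X.
    rewrite /X; apply: (@le_trans _ _ (\sum_(g | notH (A g)) u j g)).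
      by rewrite le_eqVlt; apply/orP; left; apply/eqP; apply: eq_bigl => g; rewrite in_setT.
    by apply: ler_sum => g _; apply: hw.
  have -> : \sum_(g in [set: 'I_m] | ~~ notH (A g)) u j g = \sum_(g | ~~ notH (A g)) u j g.
    by apply: eq_bigl => g; rewrite in_setT.
  exact: ar1.
have nuP : 1 - X <= \sum_(g | ~~ notH (A g)) nu g.
  rewrite /nu -mulr_suml exchange_big /= ler_pdivlMr //.
  have : \sum_(q < S) (1 - X) <= \sum_(q < S) \sum_(g | ~~ notH (A g)) u (nth h0 E q) g.
    by apply: ler_sum => q _; apply: ujP.
  by rewrite sumr_const card_ord mulr_natr.
have Hlt : forall h, ~~ notH h -> (k < #|bundle A h|)%N by move=> h; rewrite /notH -ltnNge.
pose dl g := w g - nu g.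
have dl0 : forall g, 0 <= dl g by move=> g; rewrite subr_ge0.
pose Wf h := odflt set0 [pick W : {set 'I_m} | [&& W \subset bundle A h, #|W| == k &
     k%:R * \sum_(g in bundle A h) dl g <= #|bundle A h|%:R * \sum_(g in W) dl g]].
have hWf : forall h, ~~ notH h -> [&& Wf h \subset bundle A h, #|Wf h| == k &
     k%:R * \sum_(g in bundle A h) dl g <= #|bundle A h|%:R * \sum_(g in Wf h) dl g].
  move=> h Hh; rewrite /Wf; case: pickP => [W //|none].
  have [W HW] := @topk _ _ dl dl0 k (bundle A h) (ltnW (Hlt h Hh)).
  by rewrite none in HW.
pose Fset := [set g | ~~ notH (A g) && (g \notin Wf (A g))].
have hF : (#|Fset| <= S)%N.
  apply: leq_trans hcap.
  rewrite -sum1_card (partition_big A (fun i => ~~ notH i)) /=; last first.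
    by move=> g; rewrite inE => /andP [].
  rewrite leq_eqVlt; apply/orP; left; apply/eqP; apply: eq_bigr => i Hi.
  have /and3P [sW /eqP cW _] := hWf i Hi.
  have -> : (\sum_(g | (g \in Fset) && (A g == i)) 1 = #|bundle A i :\: Wf i|)%N.
    rewrite -sum1_card; apply: eq_bigl => g; rewrite !inE.
    by case: (A g =P i) => [->|]; rewrite ?Hi ?andbF ?andbT.
  by rewrite cardsD (setIidPr sW) cW.
pose ix g := index g (enum Fset).
have ixlt : forall g, g \in Fset -> (ix g < S)%N.
  by move=> g gF; apply: leq_trans hF; rewrite cardE index_mem mem_enum.
pose b (sg : nat) : alloc n m :=
  [ffun g => if g \in Fset then nth h0 E ((ix g + sg) %% S) else A g].
have bcard : forall sg, cardinal k (b sg).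
  move=> sg; apply/forallP => i.
  case: (boolP (notH i)) => Hi.
    pose G := [set g in Fset | nth h0 E ((ix g + sg) %% S) == i].
    have sub : bundle (b sg) i \subset bundle A i :|: G.
      apply/subsetP => g; rewrite !inE ffunE.
      case: ifP => gF /eqP ->; last by rewrite eqxx.
      by move: gF; rewrite inE => ->; rewrite eqxx orbT.
    pose f g := Ordinal (ltn_pmod (ix g + sg) hS0).
    have injf : {in G &, injective f}.
      move=> g1 g2 /setIdP [g1F _] /setIdP [g2F _] /(congr1 val) /= /eqP.
      rewrite eqn_modDr !modn_small ?ixlt // => /eqP e12.
      by rewrite -(nth_index g1 (_ : g1 \in enum Fset)) ?mem_enum // -/(ix g1) e12 nth_index ?mem_enum.
    have cG : (#|G| <= k - a i)%N.
      rewrite -(card_in_imset injf).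
      have -> : (k - a i)%N = #|[set q : 'I_S | nth h0 E q == i]|.
        by rewrite -(count_card h0) hcount Hi.
      apply: subset_leq_card; apply/subsetP => q /imsetP [g gG ->].
      by move: gG; rewrite !inE => /andP [_].
    apply: leq_trans (subset_leq_card sub) _.
    apply: leq_trans (leq_card_setU _ _) _.
    move: Hi; rewrite /notH -/(a i) => Hi.
    by rewrite -(subnKC Hi) leq_add2l.
  have /and3P [sW /eqP cW _] := hWf i Hi.
  rewrite -cW; apply: subset_leq_card; apply/subsetP => g; rewrite !inE ffunE.
  case: ifP => gF /eqP ebi.
    by move: Hi; rewrite -ebi inE_H ?ltn_pmod.
  by move: gF; rewrite !inE ebi Hi /= => /negbFE.
have SR0 : (S%:R : R) != 0 by rewrite gt_eqF.
have hC : \sum_(g | g \in Fset) nu g + \sum_(g | g \notin Fset) w g <= C.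
  have e : forall sg, USW u (b sg) = \sum_(g | g \in Fset) u (nth h0 E ((ix g + sg) %% S)) g
                        + \sum_(g | g \notin Fset) w g.
    move=> sg; rewrite USW_goods (bigID (mem Fset)) /=.
    have -> : \sum_(i in Fset) u (b sg i) i = \sum_(g in Fset) u (nth h0 E ((ix g + sg) %% S)) g.
      by apply: eq_bigr => g gF; rewrite ffunE gF.
    have -> : \sum_(i < m | i \notin Fset) u (b sg i) i = \sum_(g < m | g \notin Fset) w g.
      by apply: eq_bigr => g gF; rewrite ffunE (negbTE gF).
    by [].
  have : \sum_(sg < S) USW u (b sg) <= \sum_(sg < S) C.
    by apply: ler_sum => sg _; apply: le_card; apply: bcard.
  rewrite [X in _ <= X]sumr_const card_ord.
  rewrite (eq_bigr (fun sg : 'I_S => _) (fun sg _ => e sg)).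
  rewrite big_split /= exchange_big /=.
  rewrite [X in _ + X <= _]sumr_const card_ord.
  have eF : \sum_(j in Fset) \sum_(i < S) u (nth h0 E ((ix j + i) %% S)) j = \sum_(j in Fset) nu j * S%:R.
    apply: eq_bigr => g _.
    rewrite (sum_shift hS0 (ix g) (fun q => u (nth h0 E q) g)).
    by rewrite /nu (divfK SR0).
  rewrite eF -mulr_suml -(mulr_natr (\sum_(g < m | g \notin Fset) w g)) -(mulr_natr C) -mulrDl => h.
  by rewrite -(ler_pM2r S0R).

pose Nh i := \sum_(g in bundle A i) nu g.
pose Dh i := \sum_(g in bundle A i) dl g.
pose Kh i := \sum_(g in Wf i) dl g.
pose ar i := (a i)%:R : R.
have wND : forall i, \sum_(g in bundle A i) w g = Nh i + Dh i.
  move=> i; rewrite /Nh /Dh -big_split /=; apply: eq_bigr => g _.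
  by rewrite /dl addrC subrK.
have eLB : \sum_(g in Fset) nu g + \sum_(g | g \notin Fset) w g
           = X + \sum_(i | ~~ notH i) (Nh i + Kh i).
  pose c g := if g \in Fset then nu g else w g.
  have -> : \sum_(g in Fset) nu g + \sum_(g | g \notin Fset) w g = \sum_g c g.
    rewrite [RHS](bigID (mem Fset)) /=.
    have -> : \sum_(i in Fset) c i = \sum_(g in Fset) nu g.
      by apply: eq_bigr => g gF; rewrite /c gF.
    have -> : \sum_(i < m | i \notin Fset) c i = \sum_(g < m | g \notin Fset) w g.
      by apply: eq_bigr => g gF; rewrite /c (negbTE gF).
    by [].
  rewrite (bigID (fun g => notH (A g))) /=.
  have -> : \sum_(i < m | notH (A i)) c i = X.
    apply: eq_bigr => g Hg; rewrite /c.
    have -> : (g \in Fset) = false by rewrite inE Hg.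
    by [].
  congr (X + _).
  rewrite -(@sum_part _ _ _ A (fun i => ~~ notH i) c); apply: eq_bigr => i Hi.
  have /and3P [sW _ _] := hWf i Hi.
  have eK : Kh i = \sum_(g in bundle A i) (if g \in Wf i then dl g else 0).
    rewrite -big_mkcondr /Kh; apply: eq_bigl => g.
    by case: (boolP (g \in Wf i)) => gW; rewrite ?andbT ?andbF // (subsetP sW).
  rewrite eK /Nh -big_split /=; apply: eq_bigr => g; rewrite inE => /eqP Ag.
  rewrite /c inE Ag Hi /=.
  case: (boolP (g \in Wf i)) => gW /=; last by rewrite addr0.
  by rewrite /dl addrC subrK.
have eOPT : OPT = X + \sum_(i | ~~ notH i) (Nh i + Dh i).
  rewrite hOPT (bigID (fun g => notH (A g))) /=; congr (X + _).
  rewrite -(@sum_part _ _ _ A (fun i => ~~ notH i) w); apply: eq_bigr => i Hi.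
  exact: wND.
have hZ : 1 <= X + \sum_(i | ~~ notH i) Nh i.
  rewrite /Nh (@sum_part _ _ _ A (fun i => ~~ notH i) nu).
  by rewrite -lerBlDl.
have hND : forall i, Nh i + Dh i <= 1.
  move=> i; rewrite -wND -(u_norm i) /util.
  rewrite [X in _ <= X](bigID (mem (bundle A i))) /=.
  have -> : \sum_(g in bundle A i) w g = \sum_(i0 in [set: 'I_m] | i0 \in bundle A i) u i i0.
    apply: eq_big => g; first by rewrite in_setT.
    by rewrite inE => /eqP Ag; rewrite /w Ag.
  by rewrite lerDl sumr_ge0.
have hM : \sum_(i | ~~ notH i) ar i + X <= m%:R.
  have e1 : \sum_i ar i = m%:R by rewrite /ar -natr_sum suma.
  have e2 : X <= \sum_(i | notH i) ar i.
    rewrite /X -(@sum_part _ _ _ A notH w); apply: ler_sum => i _.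
    have : \sum_(g in bundle A i) w g <= \sum_(g in bundle A i) 1 by apply: ler_sum.
    by rewrite sumr_const.
  rewrite -e1 [X in _ <= X](bigID notH) /= addrC lerD2l; exact: e2.
have hm1 : (1 < m)%N by lia.
have [bt1 hbt ebt] := @bt_facts R m k hk hm1.
have k0 : (0 : R) < k%:R by rewrite ltr0n.
have fi := @final_ineq R n (fun i => ~~ notH i) Nh Dh Kh ar X
   (\sum_(g in Fset) nu g + \sum_(g | g \notin Fset) w g) OPT k%:R m%:R
   ((1 + Num.sqrt (1 + (m%:R - 1) / k%:R)) / 2) k0 bt1 hbt eLB eOPT hZ.
have hK : forall i, ~~ notH i -> k%:R * Dh i <= ar i * Kh i.
  by move=> i Hi; have /and3P [_ _] := hWf i Hi.
have hD : forall i, ~~ notH i -> 0 <= Dh i by move=> i _; apply: sumr_ge0.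
have hN : forall i, ~~ notH i -> 0 <= Nh i by move=> i _; apply: sumr_ge0.
have hND' : forall i, ~~ notH i -> Nh i + Dh i <= 1 by move=> i _; apply: hND.
have har : forall i, ~~ notH i -> 1 <= ar i.
  move=> i Hi; rewrite /ar ler1n; apply: leq_trans hk _; apply: ltnW; exact: Hlt.
have main := fi hK hD hN hND' har hM.
apply: (conclude OPT1 bt1 _ ebt).
apply: le_trans main _; rewrite ler_pM2l //.
exact: lt_le_trans ltr01 bt1.
Qed.
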